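(* Consider a multi-sender single-uniprior index-coding instance with binary messages, information-flow graph $\mathcal{G}$ and message graph $\mathcal{U}$, and let $\mathcal{V}_S$ be the vertex set of a message-disconnected leaf SCC of $\mathcal{G}$. Then for any index code for this instance, every message $x_j$ with $j\in\mathcal{V}_S$ is a function of the transmitted codeword alone (the concatenation of all senders' outputs); i.e., any receiver can decode all messages of $\mathcal{V}_S$, even without using its own prior message.
   Context: Multi-sender single-uniprior index coding with binary messages: there are $n$ receivers and $n$ independent messages $x_1,\dots,x_n$, each a single bit uniformly distributed on $\{0,1\}$. Receiver $i$ knows $x_i$ a priori and requests a set of messages not containing $x_i$. The information-flow graph is the directed graph $\mathcal{G}=(\mathcal{V},\mathcal{A})$, $\mathcal{V}=\{1,\dots,n\}$, with an arc $(j\to i)$ iff receiver $i$ requests $x_j$. There are $S$ senders; sender $s$ knows a subset $\mathcal{M}_s$ of the messages, and every message is known to some sender. An index code consists of, for each sender $s$, an encoding function mapping the messages in $\mathcal{M}_s$ to $\ell_s$ bits, and for each receiver $i$ a decoding function that, from all senders' outputs together with $x_i$, returns every message requested by $i$, for all message values. The message graph $\mathcal{U}$ is the undirected graph on $\mathcal{V}$ with an edge $\{i,j\}$ iff some sender knows both $x_i$ and $x_j$. A leaf SCC of $\mathcal{G}$ is a strongly connected component with at least two vertices and no arc from it to a vertex outside it. A leaf SCC with vertex set $\mathcal{V}_S$ is message-disconnected iff there are two vertices in $\mathcal{V}_S$ that are not joined by any path in $\mathcal{U}$ (paths may use any vertices of $\mathcal{U}$). *)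

(* Defs.v *)
From mathcomp Require Import all_boot.
Set Implicit Arguments. Unset Strict Implicit. Unset Printing Implicit Defensive.

(* Instance data:
   n receivers / messages indexed by 'I_n; messages x : 'I_n -> bool.
   req i j  <=> receiver i requests x_j.
   S senders; M s : {set 'I_n} = messages known to sender s;
   l s = number of bits output by sender s. *)

Definition ifg_arc (n : nat) (req : 'I_n -> 'I_n -> bool) : rel 'I_n :=
  fun j i => req i j.

Definition msg_edge (n S : nat) (M : 'I_S -> {set 'I_n}) : rel 'I_n :=
  fun i j => [exists s, (i \in M s) && (j \in M s)].

Definition leaf_scc (n : nat) (req : 'I_n -> 'I_n -> bool) (Vs : {set 'I_n}) : Prop :=
  [/\ exists v, Vs = [set u | connect (ifg_arc req) v u && connect (ifg_arc req) u v],
      1 < #|Vs| &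
      forall j i, j \in Vs -> ifg_arc req j i -> i \in Vs].

Definition message_disconnected (n S : nat) (M : 'I_S -> {set 'I_n})
  (Vs : {set 'I_n}) : Prop :=
  exists a b, [/\ a \in Vs, b \in Vs & ~~ connect (msg_edge M) a b].

Definition codeword (S : nat) (l : 'I_S -> nat) : Type :=
  forall s : 'I_S, 'I_(l s) -> bool.

Definition is_index_code (n S : nat) (req : 'I_n -> 'I_n -> bool)
  (M : 'I_S -> {set 'I_n}) (l : 'I_S -> nat)
  (enc : forall s : 'I_S, ('I_n -> bool) -> 'I_(l s) -> bool)
  (dec : 'I_n -> codeword l -> bool -> 'I_n -> bool) : Prop :=
  (forall s (x y : 'I_n -> bool), (forall k, k \in M s -> x k = y k) ->
     forall t, enc s x t = enc s y t) /\
  (forall (x : 'I_n -> bool) i j, req i j ->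
     dec i (fun s => enc s x) (x i) j = x j).

(* Main.v *)
Require Import Defs.
From mathcomp Require Import all_boot.
From Stdlib Require Import ClassicalEpsilon FunctionalExtensionality.

Theorem lemma11 (n S : nat) (req : 'I_n -> 'I_n -> bool)
  (M : 'I_S -> {set 'I_n}) (l : 'I_S -> nat)
  (enc : forall s : 'I_S, ('I_n -> bool) -> 'I_(l s) -> bool)
  (dec : 'I_n -> codeword l -> bool -> 'I_n -> bool)
  (Vs : {set 'I_n}) :
  (forall i, ~~ req i i) ->
  (forall j, exists s, j \in M s) ->
  is_index_code req M enc dec ->
  leaf_scc req Vs ->
  message_disconnected M Vs ->
  forall j, j \in Vs ->
    exists f : codeword l -> bool, forall x : 'I_n -> bool, f (fun s => enc s x) = x j.
Proof.
move=> _ _ [Henc Hdec] [[v defV] _ _] [a [b [aV bV nab]]].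
pose cw (x : 'I_n -> bool) : codeword l := fun s => enc s x.
have prop : forall x y, cw x = cw y -> forall u w, connect (ifg_arc req) u w ->
    x w = y w -> x u = y u.
  move=> x y exy u w /connectP [p pth ->] {w}.
  elim: p u pth => [|w p IH] u //= /andP [arc pth] e.
  have := IH w pth e => ew.
  rewrite -(Hdec x w u arc) -(Hdec y w u arc).
  by rewrite -/(cw x) -/(cw y) exy ew.
have inV : forall u w, u \in Vs -> w \in Vs -> connect (ifg_arc req) u w.
  move=> u w; rewrite defV !inE => /andP [_ uv] /andP [vw _].
  exact: connect_trans uv vw.
have key : forall x y, cw x = cw y -> forall k, k \in Vs -> x k = y k.
  move=> x y exy k kV.
  pose z := fun k => if connect (msg_edge M) a k then x k else y k.
  have ezx : cw z = cw x.
    apply: functional_extensionality_dep => s.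
    case: (boolP [exists k, (k \in M s) && connect (msg_edge M) a k]).
    - move=> /existsP [k0 /andP [k0M ak0]].
      apply: functional_extensionality => t; apply: Henc => m mM.
      rewrite /z; have -> // : connect (msg_edge M) a m.
      apply: connect_trans ak0 (connect1 _).
      by apply/existsP; exists s; rewrite k0M mM.
    - rewrite negb_exists => /forallP H.
      rewrite exy; apply: functional_extensionality => t; apply: Henc => m mM.
      by rewrite /z; have := H m; rewrite mM /= => /negbTE ->.
  have ezy : cw z = cw y by rewrite ezx.
  have za : z a = x a by rewrite /z connect0.
  have zb : z b = y b by rewrite /z (negbTE nab).
  have e1 := prop z x ezx k a (inV k a kV aV) za.
  have e2 := prop z y ezy k b (inV k b kV bV) zb.
  by rewrite -e1 -e2.
move=> j jV.
have inh : inhabited ('I_n -> bool) by constructor; exact: (fun _ => false).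
exists (fun c => (epsilon inh (fun x => cw x = c)) j).
move=> x.
have spec := epsilon_spec inh (fun x' => cw x' = cw x) (ex_intro _ x erefl).
exact: key _ _ spec j jV.
Qed.
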